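(* For $|q|<1$ and $m\in\mathbb Z$ define $$f_m(q)=\sum_{n,k\ge0}(-1)^kq^{n(n+1)+k(k+1)/2-nk+mn}\frac{(q;q)_{n+k}}{(q;q)_n^3(q;q)_k}.$$ Then $$f_{-1}(q)=(q;q)_\infty\sum_{n\ge0}\frac{q^{n(n+1)}}{(q;q)_n^3},\qquad f_{-2}(q)=(q;q)_\infty\sum_{n\ge0}(2-q^n)\frac{q^{n(n+1)}}{(q;q)_n^3},$$ $$f_{-3}(q)=(q;q)_\infty\sum_{n\ge0}\Big((3+q^{-1})-(2+2q^{-1})q^n+q^{2n-1}\Big)\frac{q^{n(n+1)}}{(q;q)_n^3}.$$
   Context: $(a;q)_n=\prod_{j=0}^{n-1}(1-aq^j)$ and $(q;q)_\infty=\prod_{j\ge1}(1-q^j)$, for $|q|<1$. The double series converges absolutely since $n^2-nk+k^2/2$ is a positive definite quadratic form. *)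

(* Defs.v *)
From Stdlib Require Import Reals ZArith.
From Coquelicot Require Import Coquelicot.
Open Scope C_scope.

Fixpoint cpow (x : C) (n : nat) : C :=
  match n with O => 1 | S n' => x * cpow x n' end.

(* integer power x^z in C (x^(-n) = 1/x^n, meaningful for x <> 0) *)
Definition cpowZ (x : C) (z : Z) : C :=
  match z with
  | Z0 => 1
  | Zpos p => cpow x (Pos.to_nat p)
  | Zneg p => / cpow x (Pos.to_nat p)
  end.

Fixpoint qpoch (a q : C) (n : nat) : C :=
  match n with O => 1 | S n' => qpoch a q n' * (1 - a * cpow q n') end.

Definition is_qpoch_inf (q P : C) : Prop :=
  filterlim (fun N => qpoch q q N) eventually (locally P).

(* exponent n(n+1) + k(k+1)/2 - nk + mn  (k(k+1) is even, so exact) *)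
Definition fexp (m : Z) (n k : nat) : Z :=
  let n' := Z.of_nat n in let k' := Z.of_nat k in
  n' * (n' + 1) + (k' * (k' + 1)) / 2 - n' * k' + m * n'.

Definition fterm (m : Z) (q : C) (n k : nat) : C :=
  cpow (-1) k * cpowZ q (fexp m n k)
  * (qpoch q q (n + k) / (cpow (qpoch q q n) 3 * qpoch q q k)).

(* f_m(q) = F : the double series (summed as the iterated series over n of
   the series over k; it converges absolutely) has sum F *)
Definition is_f (m : Z) (q F : C) : Prop :=
  exists g : nat -> C,
    (forall n, is_series (fun k => fterm m q n k) (g n)) /\ is_series g F.

Definition bterm (q : C) (n : nat) : C :=
  cpow q (n * (n + 1)) / cpow (qpoch q q n) 3.

(* Main.v *)
Require Import Defs.
From Stdlib Require Import Reals ZArith Lia Lra ClassicalEpsilon.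
From Coquelicot Require Import Coquelicot.
Open Scope C_scope.


Lemma limC (f : nat -> C) (l : C) :
  filterlim f eventually (locally l) <->
  (forall eps : posreal, exists N, forall n, (N <= n)%nat -> Cmod (f n - l) < eps).
Proof.
  rewrite (filterlim_locally_ball_norm (F := eventually)).
  split; intros H eps; destruct (H eps) as [N HN]; exists N; intros n Hn;
  specialize (HN n Hn); unfold ball_norm in *.
  - change (Cmod (f n - l) < eps) in HN. exact HN.
  - change (Cmod (f n - l) < eps). exact HN.
Qed.

Lemma seriesC (a : nat -> C) (l : C) :
  is_series a l <->
  (forall eps : posreal, exists N, forall n, (N <= n)%nat -> Cmod (sum_n a n - l) < eps).
Proof. unfold is_series. apply limC. Qed.

Lemma sum_n_C_S (a : nat -> C) n : sum_n a (S n) = sum_n a n + a (S n).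
Proof. rewrite sum_Sn. reflexivity. Qed.

Lemma sum_n_C_0 (a : nat -> C) : sum_n a 0 = a 0%nat.
Proof. apply sum_O. Qed.

Lemma norm_sum_nC (a : nat -> C) n : Cmod (sum_n a n) <= sum_n (fun k => Cmod (a k)) n.
Proof.
  induction n.
  - rewrite !sum_O. lra.
  - rewrite sum_n_C_S, sum_Sn. simpl. unfold plus; simpl.
    eapply Rle_trans. apply Cmod_triangle. lra.
Qed.

Lemma sum_n_R_nonneg (b : nat -> R) n : (forall k, 0 <= b k) -> 0 <= sum_n b n.
Proof.
  intros H; induction n. rewrite sum_O; auto. rewrite sum_Sn. unfold plus; simpl.
  specialize (H (S n)); lra.
Qed.

Lemma sum_n_R_le (a b : nat -> R) n : (forall k, a k <= b k) -> sum_n a n <= sum_n b n.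
Proof.
  intros H; induction n. rewrite !sum_O; auto. rewrite !sum_Sn. unfold plus; simpl.
  specialize (H (S n)); lra.
Qed.

Lemma sum_n_R_mono (b : nat -> R) n m : (forall k, 0 <= b k) -> (n <= m)%nat -> sum_n b n <= sum_n b m.
Proof.
  intros H Hnm; induction Hnm. lra. rewrite sum_Sn; unfold plus; simpl. specialize (H (S m)); lra.
Qed.

Lemma seriesR_eps (b : nat -> R) B :
  is_series b B -> forall eps : posreal, exists N, forall n, (N <= n)%nat -> Rabs (sum_n b n - B) < eps.
Proof.
  intros H eps. assert (H' : is_lim_seq (sum_n b) B) by exact H.
  apply is_lim_seq_spec in H'. destruct (H' eps) as [N HN]. exists N. exact HN.
Qed.

Lemma partial_le_series (b : nat -> R) B n :
  (forall k, 0 <= b k) -> is_series b B -> sum_n b n <= B.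
Proof.
  intros Hp HB. destruct (Rle_or_lt (sum_n b n) B) as [h|h]; auto.
  assert (he: 0 < sum_n b n - B) by lra.
  destruct (seriesR_eps b B HB (mkposreal _ he)) as [N HN]. simpl in HN.
  specialize (HN (Nat.max N n) (Nat.le_max_l _ _)).
  assert (sum_n b n <= sum_n b (Nat.max N n)) by (apply sum_n_R_mono; auto; lia).
  apply Rabs_def2 in HN. lra.
Qed.

Lemma series_norm_le (a : nat -> C) (b : nat -> R) A B :
  is_series a A -> is_series b B -> (forall k, Cmod (a k) <= b k) -> Cmod A <= B.
Proof.
  intros HA HB Hab.
  assert (Hp : forall k, 0 <= b k) by (intro k; eapply Rle_trans; [apply Cmod_ge_0|apply Hab]).
  apply Rnot_lt_le; intro Hlt.
  assert (he : 0 < Cmod A - B) by lra.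
  destruct (proj1 (seriesC a A) HA (mkposreal _ he)) as [N HN]; simpl in HN.
  specialize (HN N (le_n _)).
  assert (h1 : Cmod (sum_n a N) <= B).
  { eapply Rle_trans. apply norm_sum_nC. eapply Rle_trans. apply sum_n_R_le. exact Hab.
    apply partial_le_series; auto. }
  assert (h2: Cmod A <= Cmod (sum_n a N) + Cmod (sum_n a N - A)).
  { replace A with (sum_n a N + - (sum_n a N - A)) at 1 by ring.
    eapply Rle_trans. apply Cmod_triangle. rewrite Cmod_opp. lra. }
  assert (Cmod (sum_n a N - A) = Cmod (A - sum_n a N)).
  { replace (sum_n a N - A) with (- (A - sum_n a N)) by ring. apply Cmod_opp. }
  lra.
Qed.

Lemma ex_series_C_le (a : nat -> C) (b : nat -> R) :
  (forall k, Cmod (a k) <= b k) -> ex_series b -> exists A, is_series a A.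
Proof.
  intros H Hb. apply (ex_series_le (K:=C_AbsRing) (V:=C_CompleteNormedModule) a b); auto.
Qed.


Lemma geom_shift (c r : R) (m : nat) : 0 <= r < 1 ->
  is_series (fun k => (c * r ^ (m + k))%R) (c * r ^ m / (1 - r))%R.
Proof.
  intros Hr.
  assert (H := is_series_geom r ltac:(rewrite Rabs_pos_eq; lra)).
  apply (is_series_scal (c * r ^ m)%R) in H.
  eapply is_series_ext; [|exact H]. intro n; simpl. unfold scal; simpl; unfold mult; simpl.
  rewrite pow_add. ring.
Qed.

Lemma tail_series (a : nat -> C) (L : C) n :
  is_series a L -> is_series (fun k => a (S n + k)%nat) (L - sum_n a n).
Proof.
  intros H. apply (is_series_incr_n a (S n)). lia. simpl.
  assert (E : plus (L - sum_n a n) (sum_n a n) = L).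
  { change (L - sum_n a n + sum_n a n = L). ring. }
  rewrite <- E in H. exact H.
Qed.

Lemma geom_partial (r : R) n : 0 <= r < 1 -> sum_n (fun i => r ^ i)%R n <= / (1 - r).
Proof.
  intros Hr. apply partial_le_series. intro; apply pow_le; lra.
  apply is_series_geom. rewrite Rabs_pos_eq; lra.
Qed.

Lemma sum_n_minusC (a b : nat -> C) n : sum_n a n - sum_n b n = sum_n (fun i => a i - b i) n.
Proof. induction n. rewrite !sum_O. reflexivity. rewrite !sum_n_C_S. rewrite <- IHn. ring. Qed.

Lemma fub_half (u : nat -> nat -> C) (U : nat -> C) (A r : R) :
  0 <= r < 1 -> (forall i j, Cmod (u i j) <= A * r ^ i * r ^ j) ->
  (forall i, is_series (u i) (U i)) ->
  forall n, Cmod (sum_n U n - sum_n (fun i => sum_n (u i) n) n) <= A * r ^ (S n) / (1 - r) / (1 - r).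
Proof.
  intros Hr Hb HU n.
  assert (HA : 0 <= A). { specialize (Hb 0%nat 0%nat). simpl in Hb.
    assert (0 <= Cmod (u 0%nat 0%nat)) by apply Cmod_ge_0. nra. }
  assert (Ht : forall i, Cmod (U i - sum_n (u i) n) <= A * r ^ i * r ^ (S n) / (1 - r)).
  { intro i. eapply series_norm_le.
    - apply tail_series. apply HU.
    - apply (geom_shift (A * r ^ i) r (S n) Hr).
    - intro k. simpl. eapply Rle_trans. apply Hb. simpl. lra. }
  assert (E : sum_n U n - sum_n (fun i => sum_n (u i) n) n = sum_n (fun i => U i - sum_n (u i) n) n).
  { apply sum_n_minusC. }
  rewrite E. eapply Rle_trans. apply norm_sum_nC.
  eapply Rle_trans. apply sum_n_R_le. exact Ht.
  assert (E2 : sum_n (fun i => (A * r ^ i * r ^ S n / (1 - r))%R) n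
      = (A * r ^ S n / (1 - r) * sum_n (fun i => r ^ i) n)%R).
  { rewrite <- (sum_n_mult_l (K:=R_Ring)). apply sum_n_ext. intro; unfold mult; simpl. field. lra. }
  rewrite E2.
  assert (0 <= A * r ^ S n / (1 - r)).
  { apply Rmult_le_pos. apply Rmult_le_pos; auto. apply pow_le; lra. left; apply Rinv_0_lt_compat; lra. }
  assert (H3 := geom_partial r n Hr).
  unfold Rdiv at 3. replace (A * r ^ S n / (1 - r) * / (1 - r))%R with (A * r ^ S n / (1 - r) / (1 - r))%R by reflexivity.
  unfold Rdiv at 2. apply Rmult_le_compat_l; auto.
Qed.

Lemma fubini (u : nat -> nat -> C) (U W : nat -> C) (A r : R) :
  0 <= r < 1 -> (forall i j, Cmod (u i j) <= A * r ^ i * r ^ j) ->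
  (forall i, is_series (u i) (U i)) -> (forall j, is_series (fun i => u i j) (W j)) ->
  exists SS, is_series U SS /\ is_series W SS.
Proof.
  intros Hr Hb HU HW.
  assert (HA : 0 <= A). { specialize (Hb 0%nat 0%nat). simpl in Hb.
    assert (0 <= Cmod (u 0%nat 0%nat)) by apply Cmod_ge_0. nra. }
  destruct (ex_series_C_le U (fun i => (A / (1 - r) * r ^ (0 + i))%R)) as [SS HS].
  { intro i. apply Rle_trans with (A * r ^ i * r ^ 0 / (1 - r))%R.
    eapply series_norm_le. apply HU. apply (geom_shift (A * r ^ i) r 0 Hr).
    intro k; simpl. eapply Rle_trans. apply Hb. right; ring.
    simpl. right. field. lra. }
  { eexists. apply (geom_shift (A / (1 - r)) r 0 Hr). }
  exists SS. split; auto.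
  apply seriesC. intro eps.
  assert (he : 0 < eps / 2) by (destruct eps; simpl; lra).
  destruct (proj1 (seriesC U SS) HS (mkposreal _ he)) as [N1 HN1]. simpl in HN1.
  assert (Hlim : exists N2, forall n, (N2 <= n)%nat -> 2 * (A * r ^ (S n) / (1 - r) / (1 - r)) < eps / 2).
  { assert (Hl : is_lim_seq (fun n => (r ^ n)%R) 0).
    { apply is_lim_seq_geom. rewrite Rabs_pos_eq; lra. }
    apply is_lim_seq_spec in Hl.
    set (c := (2 * A / (1 - r) / (1 - r) + 1)%R).
    assert (Hc : 0 < c). { unfold c. assert (0 <= 2 * A / (1 - r) / (1 - r)).
      { repeat apply Rmult_le_pos; try lra; left; apply Rinv_0_lt_compat; lra. } lra. }
    assert (he2 : 0 < eps / 2 / c) by (apply Rdiv_lt_0_compat; lra).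
    destruct (Hl (mkposreal _ he2)) as [N2 HN2]. exists N2. intros n Hn.
    specialize (HN2 (S n) ltac:(lia)). simpl in HN2. rewrite Rminus_0_r, Rabs_pos_eq in HN2.
    2: { apply Rmult_le_pos; try lra; apply pow_le; lra. }
    assert (Hrn : 0 <= r * r ^ n) by (apply Rmult_le_pos; try lra; apply pow_le; lra).
    replace (2 * (A * r ^ S n / (1 - r) / (1 - r)))%R with ((2 * A / (1 - r) / (1 - r)) * (r * r ^ n))%R
      by (simpl; field; lra).
    apply Rle_lt_trans with (c * (r * r^n))%R. apply Rmult_le_compat_r; auto. unfold c; lra.
    replace (eps / 2)%R with (c * (eps / 2 / c))%R by (field; lra).
    apply Rmult_lt_compat_l; auto. }
  destruct Hlim as [N2 HN2].
  exists (Nat.max N1 N2). intros n Hn.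
  assert (h1 := fub_half u U A r Hr Hb HU n).
  assert (h2 := fub_half (fun j i => u i j) W A r Hr ltac:(intros; eapply Rle_trans; [apply Hb|right; ring]) HW n).
  rewrite <- sum_n_switch in h2.
  specialize (HN1 n ltac:(lia)). specialize (HN2 n ltac:(lia)).
  set (R0 := sum_n (fun i => sum_n (u i) n) n) in *.
  replace (sum_n W n - SS) with ((sum_n W n - R0) - (sum_n U n - R0) + (sum_n U n - SS)) by ring.
  eapply Rle_lt_trans. apply Cmod_triangle.
  eapply Rle_lt_trans. apply Rplus_le_compat_r. unfold Cminus at 1. eapply Rle_trans. apply Cmod_triangle.
  rewrite Cmod_opp. apply Rle_refl. lra.
Qed.


Lemma Cinv_nz (x : C) : x <> 0 -> / x <> 0.
Proof. intros Hx H. apply C1_nz. rewrite <- (Cinv_r x Hx), H. ring. Qed.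

Lemma cpow_add (x : C) a b : cpow x (a + b) = cpow x a * cpow x b.
Proof. induction a; simpl. ring. rewrite IHa. ring. Qed.

Lemma cpow_nz (x : C) n : x <> 0 -> cpow x n <> 0.
Proof. intros Hx; induction n; simpl. apply C1_nz. apply Cmult_neq_0; auto. Qed.

Lemma Cmod_cpow (x : C) n : Cmod (cpow x n) = (Cmod x ^ n)%R.
Proof. induction n; simpl. apply Cmod_1. rewrite Cmod_mult, IHn. reflexivity. Qed.

Lemma cpow_mul (x y : C) n : cpow (x * y) n = cpow x n * cpow y n.
Proof. induction n; simpl. ring. rewrite IHn. ring. Qed.

Lemma cpow_1 n : cpow 1 n = 1.
Proof. induction n; simpl. ring. rewrite IHn; ring. Qed.

Lemma cpow_m1_S n : cpow (-1) (S n) = - cpow (-1) n.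
Proof. simpl. ring. Qed.

Lemma cpowZ_alt (q : C) z : cpowZ q z =
  if (0 <=? z)%Z then cpow q (Z.to_nat z) else / cpow q (Z.to_nat (- z)).
Proof.
  destruct z; simpl; try reflexivity.
Qed.

Lemma cpowZ_succ (q : C) z : q <> 0 -> cpowZ q (z + 1) = cpowZ q z * q.
Proof.
  intros Hq. rewrite !cpowZ_alt.
  destruct (Z.leb_spec 0 z) as [h|h].
  - destruct (Z.leb_spec 0 (z+1)) as [h2|h2]; [|lia].
    replace (Z.to_nat (z + 1)) with (S (Z.to_nat z)) by lia. simpl. ring.
  - destruct (Z.leb_spec 0 (z+1)) as [h2|h2].
    + assert (z = -1)%Z by lia. subst. simpl. field. auto.
    + replace (Z.to_nat (- z)) with (S (Z.to_nat (- (z + 1)))) by lia. simpl.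
      field. split; auto. apply cpow_nz; auto.
Qed.

Lemma cpowZ_pred (q : C) z : q <> 0 -> cpowZ q (z - 1) = cpowZ q z / q.
Proof.
  intros Hq. replace z with ((z - 1) + 1)%Z at 2 by lia. rewrite cpowZ_succ; auto.
  field; auto.
Qed.

Lemma cpowZ_add (q : C) a b : q <> 0 -> cpowZ q (a + b) = cpowZ q a * cpowZ q b.
Proof.
  intros Hq. induction b using Z.peano_ind.
  - rewrite Z.add_0_r. simpl. ring.
  - rewrite <- Z.add_1_r. replace (a + (b + 1))%Z with ((a + b) + 1)%Z by lia.
    rewrite !cpowZ_succ, IHb; auto. ring.
  - rewrite <- Z.sub_1_r. replace (a + (b - 1))%Z with ((a + b) - 1)%Z by lia.
    rewrite !cpowZ_pred, IHb; auto. field; auto.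
Qed.

Lemma cpowZ_nat (q : C) n : cpowZ q (Z.of_nat n) = cpow q n.
Proof. rewrite cpowZ_alt. destruct (Z.leb_spec 0 (Z.of_nat n)); [|lia]. rewrite Nat2Z.id. auto. Qed.

Lemma cpowZ_0 (q : C) : cpowZ q 0 = 1.
Proof. reflexivity. Qed.

Lemma cpowZ_nz (q : C) z : q <> 0 -> cpowZ q z <> 0.
Proof. intros Hq. rewrite cpowZ_alt. destruct (0 <=? z)%Z. apply cpow_nz; auto.
  apply Cinv_nz. apply cpow_nz; auto. Qed.

Lemma Cmod_cpowZ (q : C) z : q <> 0 -> Cmod (cpowZ q z) = powerRZ (Cmod q) z.
Proof.
  intros Hq. destruct z; simpl.
  - apply Cmod_1.
  - apply Cmod_cpow.
  - rewrite Cmod_inv. rewrite Cmod_cpow. reflexivity. apply cpow_nz; auto.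
Qed.

Lemma cpowZ_mul_nat (q : C) (e : Z) n : q <> 0 -> cpow (cpowZ q e) n = cpowZ q (e * Z.of_nat n).
Proof.
  intros Hq. induction n. simpl. rewrite Z.mul_0_r. reflexivity.
  rewrite Nat2Z.inj_succ. replace (e * Z.succ (Z.of_nat n))%Z with (e + e * Z.of_nat n)%Z by lia.
  rewrite cpowZ_add; auto. simpl. rewrite IHn. reflexivity.
Qed.

Lemma pow_le1 (r : R) n : 0 <= r <= 1 -> (r ^ n <= 1)%R.
Proof. intros Hr. induction n; simpl. lra. assert (0 <= r ^ n)%R by (apply pow_le; lra). nra. Qed.

Lemma powerRZ_anti r a b : 0 < r <= 1 -> (a <= b)%Z -> powerRZ r b <= powerRZ r a.
Proof.
  intros Hr Hab. replace b with (a + (b - a))%Z by lia. rewrite powerRZ_add by lra.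
  assert (0 < powerRZ r a) by (apply powerRZ_lt; lra).
  assert (powerRZ r (b - a) <= 1).
  { replace (b - a)%Z with (Z.of_nat (Z.to_nat (b - a))) by lia. rewrite <- pow_powerRZ.
    apply pow_le1; lra. }
  assert (0 <= powerRZ r (b-a)) by (apply powerRZ_le; lra).
  nra.
Qed.

Lemma powerRZ_nat r n : powerRZ r (Z.of_nat n) = (r ^ n)%R.
Proof. symmetry. apply pow_powerRZ. Qed.


Lemma Cmod_1_minus_ge (y : C) : (1 - Cmod y <= Cmod (1 - y))%R.
Proof.
  assert (H : Cmod 1 <= Cmod (1 - y) + Cmod y).
  { replace (RtoC 1) with ((1 - y) + y) at 1 by ring. apply Cmod_triangle. }
  rewrite Cmod_1 in H. lra.
Qed.

Lemma Cmod_1_minus_le (y : C) : (Cmod (1 - y) <= 1 + Cmod y)%R.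
Proof.
  unfold Cminus. eapply Rle_trans. apply Cmod_triangle. rewrite Cmod_opp, Cmod_1. lra.
Qed.

Lemma exp_mono x y : (x <= y)%R -> (exp x <= exp y)%R.
Proof. intros [h|h]. left; apply exp_increasing; auto. subst; lra. Qed.

Lemma qfac_nz (q : C) j : Cmod q < 1 -> 1 - q * cpow q j <> 0.
Proof.
  intros Hq H. assert (h := Cmod_1_minus_ge (q * cpow q j)). rewrite H, Cmod_0 in h.
  rewrite Cmod_mult, Cmod_cpow in h.
  assert (0 <= Cmod q) by apply Cmod_ge_0.
  assert (Cmod q ^ j <= 1)%R by (apply pow_le1; lra). nra.
Qed.

Lemma Q_nz (q : C) n : Cmod q < 1 -> qpoch q q n <> 0.
Proof.
  intros Hq. induction n; simpl. apply C1_nz. apply Cmult_neq_0; auto. apply qfac_nz; auto.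
Qed.

Definition KL (q : C) : R := exp (/ (1 - Cmod q) / (1 - Cmod q)).
Definition KU (q : C) : R := exp (/ (1 - Cmod q)).

Lemma Q_low_aux (q : C) n : Cmod q < 1 ->
  (1 <= Cmod (qpoch q q n) * exp (Cmod q * (1 - Cmod q ^ n) / (1 - Cmod q) / (1 - Cmod q)))%R.
Proof.
  intros Hq. set (r := Cmod q) in *. assert (Hr0 : 0 <= r) by apply Cmod_ge_0.
  induction n.
  - simpl. rewrite Cmod_1. replace (r * (1 - 1) / (1 - r) / (1 - r))%R with 0%R by (field; lra).
    rewrite exp_0. lra.
  - simpl qpoch. rewrite Cmod_mult.
    set (x := (r * r ^ n)%R).
    assert (Hx0 : 0 <= x) by (unfold x; apply Rmult_le_pos; auto; apply pow_le; auto).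
    assert (Hxr : x <= r) by (unfold x; assert (r ^ n <= 1)%R by (apply pow_le1; lra); nra).
    assert (Hf : (1 - x <= Cmod (1 - q * cpow q n))%R).
    { eapply Rle_trans; [|apply Cmod_1_minus_ge]. rewrite Cmod_mult, Cmod_cpow. unfold x, r; lra. }
    replace (r * (1 - r ^ S n) / (1 - r) / (1 - r))%R
      with (r * (1 - r ^ n) / (1 - r) / (1 - r) + x / (1 - r))%R by (unfold x; simpl; field; lra).
    rewrite exp_plus.
    assert (Hk : (1 <= (1 - x) * exp (x / (1 - r)))%R).
    { assert (h1 : x / (1 - x) <= x / (1 - r)).
      { unfold Rdiv. apply Rmult_le_compat_l; auto. apply Rinv_le_contravar; lra. }
      assert (h2 := exp_ineq1_le (x / (1 - x))).
      assert (h3 := exp_mono _ _ h1).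
      assert (h4 : ((1 - x) * (1 + x / (1 - x)) = 1)%R) by (field; lra).
      nra. }
    assert (0 <= Cmod (qpoch q q n)) by apply Cmod_ge_0.
    assert (0 < exp (r * (1 - r ^ n) / (1 - r) / (1 - r))) by apply exp_pos.
    assert (0 < exp (x / (1 - r))) by apply exp_pos.
    assert (Cmod (qpoch q q n) * (1 - x) <= Cmod (qpoch q q n) * Cmod (1 - q * cpow q n))%R
      by (apply Rmult_le_compat_l; auto).
    set (A := Cmod (qpoch q q n)) in *. set (B := Cmod (1 - q * cpow q n)) in *.
    set (E1 := exp (r * (1 - r ^ n) / (1 - r) / (1 - r))) in *.
    set (E2 := exp (x / (1 - r))) in *.
    (* A*E1 >= 1, (1-x)*E2 >= 1, B >= 1-x *)
    assert (1 <= A * E1 * ((1 - x) * E2))%R by nra.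
    nra.
Qed.

Lemma Q_inv_bound (q : C) n : Cmod q < 1 -> (Cmod (/ qpoch q q n) <= KL q)%R.
Proof.
  intros Hq. rewrite Cmod_inv by (apply Q_nz; auto).
  assert (H := Q_low_aux q n Hq). set (r := Cmod q) in *.
  assert (Hr0 : 0 <= r) by apply Cmod_ge_0.
  assert (Hp : 0 < Cmod (qpoch q q n)).
  { apply Cmod_gt_0. apply Q_nz; auto. }
  assert (Hle : exp (r * (1 - r ^ n) / (1 - r) / (1 - r)) <= KL q).
  { unfold KL. apply exp_mono. fold r. unfold Rdiv.
    assert (0 <= r ^ n)%R by (apply pow_le; auto).
    assert (r ^ n <= 1)%R by (apply pow_le1; lra).
    assert (0 < / (1 - r)) by (apply Rinv_0_lt_compat; lra).
    assert (r * (1 - r ^ n) <= 1)%R by nra.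
    assert (0 <= r * (1 - r ^ n))%R by nra.
    set (t := (/ (1 - r))%R) in *. set (a := (r * (1 - r ^ n))%R) in *.
    assert (0 < t * t) by (apply Rmult_lt_0_compat; lra). nra. }
  apply Rmult_le_reg_l with (Cmod (qpoch q q n)); auto.
  rewrite Rinv_r by lra. nra.
Qed.

Lemma Q_bound (q : C) n : Cmod q < 1 -> (Cmod (qpoch q q n) <= KU q)%R.
Proof.
  intros Hq. unfold KU. set (r := Cmod q) in *. assert (Hr0 : 0 <= r) by apply Cmod_ge_0.
  assert (H : forall n, Cmod (qpoch q q n) <= exp (r * (1 - r ^ n) / (1 - r))).
  { induction n0.
    - simpl. rewrite Cmod_1. replace (r * (1 - 1) / (1 - r))%R with 0%R by (field; lra).
      rewrite exp_0; lra.
    - simpl qpoch. rewrite Cmod_mult.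
      replace (r * (1 - r ^ S n0) / (1 - r))%R with (r * (1 - r ^ n0) / (1 - r) + r * r ^ n0)%R
        by (simpl; field; lra).
      rewrite exp_plus.
      assert (h1 : Cmod (1 - q * cpow q n0) <= exp (r * r ^ n0)).
      { eapply Rle_trans. apply Cmod_1_minus_le. rewrite Cmod_mult, Cmod_cpow. apply exp_ineq1_le. }
      apply Rmult_le_compat; auto; apply Cmod_ge_0. }
  eapply Rle_trans. apply H. apply exp_mono.
  assert (0 <= r ^ n)%R by (apply pow_le; auto).
  assert (r ^ n <= 1)%R by (apply pow_le1; lra).
  unfold Rdiv. assert (0 < / (1 - r))%R by (apply Rinv_0_lt_compat; lra).
  set (t := (/ (1 - r))%R) in *. assert (r * (1 - r ^ n) <= 1)%R by nra.
  set (a := (r * (1 - r ^ n))%R) in *. nra.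
Qed.

Lemma KL_pos (q : C) : 0 < KL q.
Proof. apply exp_pos. Qed.
Lemma KU_pos (q : C) : 0 < KU q.
Proof. apply exp_pos. Qed.


Ltac Cring := lazymatch goal with |- ?a = ?b => change (@eq C a b); ring end.

Lemma C_eq_eps (c d : C) : (forall eps : posreal, Cmod (c - d) < eps) -> c = d.
Proof.
  intros H. destruct (Req_dec (Cmod (c - d)) 0) as [h|h].
  - apply Cmod_eq_0 in h. replace c with ((c - d) + d) by ring. rewrite h. ring.
  - assert (hp : 0 < Cmod (c - d)) by (assert (0 <= Cmod (c - d)) by apply Cmod_ge_0; lra).
    specialize (H (mkposreal _ hp)). simpl in H. lra.
Qed.

Lemma seriesC_unique (a : nat -> C) (x y : C) : is_series a x -> is_series a y -> x = y.
Proof.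
  intros Hx Hy. apply C_eq_eps. intro eps.
  assert (he : 0 < eps / 2) by (destruct eps; simpl; lra).
  destruct (proj1 (seriesC a x) Hx (mkposreal _ he)) as [N1 H1].
  destruct (proj1 (seriesC a y) Hy (mkposreal _ he)) as [N2 H2].
  specialize (H1 (Nat.max N1 N2) ltac:(lia)). specialize (H2 (Nat.max N1 N2) ltac:(lia)).
  simpl in *. set (s := sum_n a (Nat.max N1 N2)) in *.
  replace (x - y) with ((s - y) + - (s - x)) by ring.
  eapply Rle_lt_trans. apply Cmod_triangle. rewrite Cmod_opp. lra.
Qed.

Lemma powerRZ_lin_bound (r : R) (f : Z) (l : nat) (D : Z) :
  0 < r <= 1 -> (Z.of_nat l - D <= f)%Z -> (powerRZ r f <= powerRZ r (- D) * r ^ l)%R.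
Proof.
  intros Hr H. eapply Rle_trans. apply (powerRZ_anti r (Z.of_nat l - D)); auto.
  replace (Z.of_nat l - D)%Z with (- D + Z.of_nat l)%Z by lia.
  rewrite powerRZ_add by (apply Rgt_not_eq; lra). rewrite powerRZ_nat. lra.
Qed.

Lemma sum_telescopeC (a : nat -> C) N : sum_n (fun i => a (S i) - a i) N = a (S N) - a 0%nat.
Proof. induction N. rewrite sum_O. reflexivity. rewrite sum_n_C_S, IHN. Cring. Qed.

Lemma Q_conv (q : C) : Cmod q < 1 -> exists P, is_qpoch_inf q P.
Proof.
  intros Hq. set (r := Cmod q) in *. assert (Hr0 : 0 <= r) by apply Cmod_ge_0.
  destruct (ex_series_C_le (fun i => qpoch q q (S i) - qpoch q q i) (fun i => (KU q * r ^ (0 + i))%R)) as [D HD].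
  { intro i. simpl qpoch. replace (qpoch q q i * (1 - q * cpow q i) - qpoch q q i)
      with (qpoch q q i * (- (q * cpow q i))) by ring.
    rewrite Cmod_mult, Cmod_opp, Cmod_mult, Cmod_cpow. fold r. simpl.
    assert (h := Q_bound q i Hq). assert (0 <= r ^ i)%R by (apply pow_le; auto).
    assert (0 <= Cmod (qpoch q q i)) by apply Cmod_ge_0.
    assert (r * r ^ i <= r ^ i)%R by nra. nra. }
  { eexists. apply (geom_shift (KU q) r 0). lra. }
  exists (1 + D). unfold is_qpoch_inf. apply limC. intro eps.
  destruct (proj1 (seriesC _ D) HD eps) as [N HN].
  exists (S N). intros n Hn. destruct n as [|n]; [lia|].
  specialize (HN n ltac:(lia)). rewrite sum_telescopeC in HN. simpl qpoch in HN |- *.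
  replace (qpoch q q n * (1 - q * cpow q n) - (1 + D))
    with (qpoch q q n * (1 - q * cpow q n) - 1 - D) by ring. exact HN.
Qed.

Definition Tn (l : nat) : Z := (Z.of_nat l * (Z.of_nat l + 1) / 2)%Z.

Lemma Tn_spec l : (2 * Tn l = Z.of_nat l * (Z.of_nat l + 1))%Z.
Proof.
  unfold Tn. induction l.
  - reflexivity.
  - rewrite Nat2Z.inj_succ.
    replace (Z.succ (Z.of_nat l) * (Z.succ (Z.of_nat l) + 1))%Z
      with (Z.of_nat l * (Z.of_nat l + 1) + (Z.of_nat l + 1) * 2)%Z by lia.
    rewrite Z.div_add by lia. lia.
Qed.

Lemma Tn_S l : Tn (S l) = (Tn l + Z.of_nat l + 1)%Z.
Proof. assert (h1 := Tn_spec l). assert (h2 := Tn_spec (S l)). rewrite Nat2Z.inj_succ in h2. lia. Qed.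

Lemma Tn_0 : Tn 0 = 0%Z.
Proof. reflexivity. Qed.


Lemma geom_small (c r : R) : 0 <= r < 1 -> forall eps : posreal, exists N, forall n, (N <= n)%nat -> (c * r ^ n < eps)%R.
Proof.
  intros Hr eps.
  assert (Hl : is_lim_seq (fun n => (r ^ n)%R) 0).
  { apply is_lim_seq_geom. rewrite Rabs_pos_eq; lra. }
  apply is_lim_seq_spec in Hl.
  set (c' := (Rabs c + 1)%R).
  assert (Hc : 0 < c') by (unfold c'; assert (0 <= Rabs c) by apply Rabs_pos; lra).
  assert (he2 : 0 < eps / c') by (apply Rdiv_lt_0_compat; destruct eps; simpl; lra).
  destruct (Hl (mkposreal _ he2)) as [N2 HN2]. exists N2. intros n Hn.
  specialize (HN2 n Hn). simpl in HN2. rewrite Rminus_0_r, Rabs_pos_eq in HN2.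
  2: apply pow_le; lra.
  assert (0 <= r ^ n)%R by (apply pow_le; lra).
  assert (c <= c')%R by (unfold c'; assert (c <= Rabs c) by apply Rle_abs; lra).
  apply Rle_lt_trans with (c' * r ^ n)%R. apply Rmult_le_compat_r; auto.
  replace (pos eps) with (c' * (eps / c'))%R by (field; lra).
  apply Rmult_lt_compat_l; auto.
Qed.

Definition eterm (q : C) (e : Z) (l : nat) : C :=
  cpow (-1) l * cpowZ q (Tn l + e * Z.of_nat l) / qpoch q q l.

Lemma Cmod_m1pow n : Cmod (cpow (-1) n) = 1%R.
Proof. rewrite Cmod_cpow, Cmod_R, Rabs_left by lra. replace (- -1)%R with 1%R by ring. apply pow1. Qed.

Lemma eterm_bound (q : C) e l : q <> 0 -> Cmod q < 1 ->
  (Cmod (eterm q e l) <= KL q * powerRZ (Cmod q) (Tn l + e * Z.of_nat l))%R.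
Proof.
  intros Hq0 Hq. unfold eterm, Cdiv. rewrite !Cmod_mult, Cmod_m1pow, Cmod_cpowZ by auto.
  assert (h := Q_inv_bound q l Hq).
  assert (0 <= powerRZ (Cmod q) (Tn l + e * Z.of_nat l))%R
    by (apply powerRZ_le; apply Cmod_gt_0; auto).
  nra.
Qed.

Lemma Tn_lin l e : (Z.of_nat l - 2 * (e - 1) * (e - 1) <= Tn l + e * Z.of_nat l)%Z.
Proof. assert (h := Tn_spec l).
  assert (h1 := Z.square_nonneg (Z.of_nat l + e - 1)). assert (h2 := Z.square_nonneg (e - 1)).
  assert (h3 : (0 <= Z.of_nat l)%Z) by lia. nia. Qed.

Lemma eterm_bound2 (q : C) e l : q <> 0 -> Cmod q < 1 ->
  (Cmod (eterm q e l) <= KL q * powerRZ (Cmod q) (- (2 * (e - 1) * (e - 1))) * Cmod q ^ l)%R.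
Proof.
  intros Hq0 Hq. eapply Rle_trans. apply eterm_bound; auto.
  rewrite Rmult_assoc. apply Rmult_le_compat_l. left; apply KL_pos.
  apply powerRZ_lin_bound. split. apply Cmod_gt_0; auto. lra. apply Tn_lin.
Qed.

Lemma eterm_ex (q : C) e : q <> 0 -> Cmod q < 1 -> exists X, is_series (eterm q e) X.
Proof.
  intros Hq0 Hq. apply (ex_series_C_le _ (fun l => (KL q * powerRZ (Cmod q) (- (2 * (e - 1) * (e - 1))) * Cmod q ^ (0 + l))%R)).
  intro l. apply eterm_bound2; auto.
  eexists. apply geom_shift. split. apply Cmod_ge_0. auto.
Qed.

Lemma eterm_S (q : C) e l : q <> 0 -> Cmod q < 1 ->
  eterm q e (S l) - eterm q (e + 1) (S l) = - cpowZ q (e + 1) * eterm q (e + 1) l.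
Proof.
  intros Hq0 Hq. unfold eterm.
  replace (Tn (S l) + e * Z.of_nat (S l))%Z with ((Tn l + (e + 1) * Z.of_nat l) + (e + 1))%Z
    by (rewrite Tn_S; lia).
  replace (Tn (S l) + (e + 1) * Z.of_nat (S l))%Z with ((Tn l + (e + 1) * Z.of_nat l) + (e + 1) + Z.of_nat (S l))%Z
    by (rewrite Tn_S; lia).
  rewrite !cpowZ_add, cpowZ_nat by auto. simpl.
  assert (h1 := Q_nz q l Hq). assert (h2 := qfac_nz q l Hq).
  field. auto.
Qed.

Lemma eterm_0 (q : C) e : eterm q e 0 = 1.
Proof. unfold eterm. simpl. rewrite Z.mul_0_r. simpl. field. Qed.

Lemma euler_feq (q : C) e (X Y : C) : q <> 0 -> Cmod q < 1 ->
  is_series (eterm q e) X -> is_series (eterm q (e + 1)) Y -> X = (1 - cpowZ q (e + 1)) * Y.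
Proof.
  intros Hq0 Hq HX HY.
  assert (H1 := is_series_minus _ _ _ _ HX HY).
  assert (H2 : is_series (fun l => (fun l => plus (eterm q e l) (opp (eterm q (e + 1) l))) (S l))
                 (- cpowZ q (e + 1) * Y)).
  { eapply is_series_ext; [|apply (is_series_scal (K:=C_AbsRing) (V:=C_NormedModule) (- cpowZ q (e + 1))); exact HY].
    intro n. simpl. symmetry. apply eterm_S; auto. }
  set (a := fun l => plus (eterm q e l) (opp (eterm q (e + 1) l))) in *.
  assert (Ha0 : a 0%nat = RtoC 0). { unfold a. rewrite !eterm_0. change (1 + - (1) = 0). ring. }
  assert (H3 : is_series (fun l => a (S l)) (plus (- cpowZ q (e + 1) * Y) (opp (a 0%nat)))).
  { rewrite Ha0. replace (plus (- cpowZ q (e + 1) * Y) (opp (RtoC 0))) with (- cpowZ q (e + 1) * Y).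
    exact H2. change (- cpowZ q (e + 1) * Y = - cpowZ q (e + 1) * Y + - 0). ring. }
  assert (H4 := is_series_decr_1 (K:=C_AbsRing) (V:=C_NormedModule) a _ H3).
  assert (E := seriesC_unique _ _ _ H1 H4).
  change (X + - Y = - cpowZ q (e + 1) * Y) in E.
  replace X with ((X + - Y) + Y) by Cring. rewrite E. Cring.
Qed.

Lemma euler_neg (q : C) (d : nat) (X : C) : q <> 0 -> Cmod q < 1 ->
  is_series (eterm q (- Z.of_nat d - 1)) X -> X = 0.
Proof.
  intros Hq0 Hq. revert X. induction d; intros X HX.
  - destruct (eterm_ex q 0 Hq0 Hq) as [Y HY].
    rewrite (euler_feq q _ X Y Hq0 Hq HX) by (simpl; exact HY). simpl. ring.
  - destruct (eterm_ex q (- Z.of_nat d - 1) Hq0 Hq) as [Y HY].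
    assert (HX' : is_series (eterm q (- Z.of_nat (S d) - 1)) X) by exact HX.
    replace (- Z.of_nat d - 1)%Z with ((- Z.of_nat (S d) - 1) + 1)%Z in HY by lia.
    rewrite (euler_feq q _ X Y Hq0 Hq HX' HY).
    replace ((- Z.of_nat (S d) - 1) + 1)%Z with (- Z.of_nat d - 1)%Z in HY by lia.
    rewrite (IHd Y HY). ring.
Qed.

Lemma euler_chain (q : C) (t : nat) (X : C) : q <> 0 -> Cmod q < 1 ->
  is_series (eterm q (Z.of_nat t)) X ->
  forall N Y, is_series (eterm q (Z.of_nat (t + N))) Y -> X * qpoch q q t = Y * qpoch q q (t + N).
Proof.
  intros Hq0 Hq HX N. induction N; intros Y HY.
  - rewrite Nat.add_0_r in *. rewrite (seriesC_unique _ _ _ HX HY). reflexivity.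
  - destruct (eterm_ex q (Z.of_nat (t + N)) Hq0 Hq) as [Y' HY'].
    rewrite (IHN Y' HY').
    replace (Z.of_nat (t + S N)) with (Z.of_nat (t + N) + 1)%Z in HY by lia.
    rewrite (euler_feq q _ Y' Y Hq0 Hq HY' HY).
    replace (Z.of_nat (t + N) + 1)%Z with (Z.of_nat (S (t + N))) by lia.
    rewrite cpowZ_nat. replace (t + S N)%nat with (S (t + N)) by lia. simpl. ring.
Qed.

Lemma euler_near1 (q : C) (s : nat) (Y : C) : q <> 0 -> Cmod q < 1 ->
  is_series (eterm q (Z.of_nat s)) Y -> (Cmod (Y - 1) <= KL q * Cmod q ^ (S s) / (1 - Cmod q))%R.
Proof.
  intros Hq0 Hq HY. assert (Hr0 : 0 <= Cmod q) by apply Cmod_ge_0.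
  assert (HT := tail_series _ _ 0 HY). rewrite sum_O, eterm_0 in HT.
  eapply series_norm_le. exact HT. apply (geom_shift (KL q) (Cmod q) (S s)). lra.
  intro l. simpl plus. eapply Rle_trans. apply eterm_bound; auto.
  apply Rmult_le_compat_l. left; apply KL_pos.
  rewrite pow_powerRZ. apply powerRZ_anti. split. apply Cmod_gt_0; auto. lra.
  assert (h := Tn_spec (S l)). rewrite Nat2Z.inj_succ in h. change (1 + l)%nat with (S l). rewrite !Nat2Z.inj_add, !Nat2Z.inj_succ. nia.
Qed.

Lemma euler_pos (q P : C) (t : nat) (X : C) : q <> 0 -> Cmod q < 1 -> is_qpoch_inf q P ->
  is_series (eterm q (Z.of_nat t)) X -> X = P / qpoch q q t.
Proof.
  intros Hq0 Hq HP HX. assert (Hr0 : 0 <= Cmod q) by apply Cmod_ge_0.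
  assert (Hnz := Q_nz q t Hq).
  assert (E : X * qpoch q q t = P).
  { apply C_eq_eps. intro eps.
    assert (he : 0 < eps / 2) by (destruct eps; simpl; lra).
    destruct (proj1 (limC _ P) HP (mkposreal _ he)) as [N1 HN1].
    destruct (geom_small (KU q * (KL q * Cmod q / (1 - Cmod q))) (Cmod q) ltac:(lra) (mkposreal _ he)) as [N2 HN2].
    simpl in *.
    destruct (eterm_ex q (Z.of_nat (t + (N1 + N2))) Hq0 Hq) as [Y HY].
    rewrite (euler_chain q t X Hq0 Hq HX (N1 + N2) Y HY).
    specialize (HN1 (t + (N1 + N2))%nat ltac:(lia)).
    specialize (HN2 (t + (N1 + N2))%nat ltac:(lia)).
    assert (hb := euler_near1 q _ Y Hq0 Hq HY).
    assert (hQ := Q_bound q (t + (N1 + N2)) Hq).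
    set (QQ := qpoch q q (t + (N1 + N2))) in *.
    replace (Y * QQ - P) with ((Y - 1) * QQ + (QQ - P)) by ring.
    eapply Rle_lt_trans. apply Cmod_triangle. rewrite Cmod_mult.
    assert (Cmod (Y - 1) * Cmod QQ <= KU q * (KL q * Cmod q / (1 - Cmod q)) * Cmod q ^ (t + (N1 + N2)))%R.
    { replace (KU q * (KL q * Cmod q / (1 - Cmod q)) * Cmod q ^ (t + (N1 + N2)))%R
        with ((KL q * Cmod q ^ S (t + (N1 + N2)) / (1 - Cmod q)) * KU q)%R by (simpl; field; lra).
      apply Rmult_le_compat; auto; apply Cmod_ge_0. }
    lra. }
  rewrite <- E. field. auto.
Qed.

Lemma euler (q P : C) (e : Z) : q <> 0 -> Cmod q < 1 -> is_qpoch_inf q P ->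
  is_series (eterm q e) (if (e <? 0)%Z then RtoC 0 else P / qpoch q q (Z.to_nat e)).
Proof.
  intros Hq0 Hq HP. destruct (eterm_ex q e Hq0 Hq) as [X HX].
  destruct (Z.ltb_spec e 0) as [h|h].
  - replace e with (- Z.of_nat (Z.to_nat (- e - 1)) - 1)%Z in HX by lia.
    rewrite <- (euler_neg q _ X Hq0 Hq HX).
    replace (- Z.of_nat (Z.to_nat (- e - 1)) - 1)%Z with e in HX by lia. exact HX.
  - replace e with (Z.of_nat (Z.to_nat e)) in HX by lia.
    rewrite <- (euler_pos q P _ X Hq0 Hq HP HX).
    replace (Z.of_nat (Z.to_nat e)) with e in HX by lia. exact HX.
Qed.


Lemma sum_n_shift1 (f : nat -> C) k : sum_n f (S k) = f 0%nat + sum_n (fun j => f (S j)) k.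
Proof.
  induction k.
  - rewrite sum_n_C_S, !sum_O. reflexivity.
  - rewrite sum_n_C_S, IHk, sum_n_C_S. Cring.
Qed.

Lemma sum_n_extC (f g : nat -> C) k : (forall j, (j <= k)%nat -> f j = g j) -> sum_n f k = sum_n g k.
Proof. intros H. apply sum_n_ext_loc. exact H. Qed.

Lemma sum_n_scalC (c : C) (f : nat -> C) k : sum_n (fun j => c * f j) k = c * sum_n f k.
Proof. induction k. rewrite !sum_O. reflexivity. rewrite !sum_n_C_S, IHk. Cring. Qed.

Lemma sum_n_plusC (f g : nat -> C) k : sum_n (fun j => f j + g j) k = sum_n f k + sum_n g k.
Proof. induction k. rewrite !sum_O. reflexivity. rewrite !sum_n_C_S, IHk. Cring. Qed.

Definition qb (q : C) (k j : nat) : C :=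
  if (j <=? k)%nat then qpoch q q k / (qpoch q q j * qpoch q q (k - j)) else 0.

Lemma qb_0 (q : C) k : Cmod q < 1 -> qb q k 0 = 1.
Proof. intros Hq. unfold qb. simpl. rewrite Nat.sub_0_r. field. apply Q_nz; auto. Qed.

Lemma qb_big (q : C) k j : (k < j)%nat -> qb q k j = 0.
Proof. intros H. unfold qb. destruct (Nat.leb_spec j k); [lia|auto]. Qed.

Lemma qb_pascal (q : C) k i : Cmod q < 1 ->
  qb q (S k) (S i) = qb q k (S i) + cpow q (k - i) * qb q k i.
Proof.
  intros Hq. unfold qb.
  destruct (Nat.leb_spec (S i) (S k)) as [h1|h1];
  destruct (Nat.leb_spec (S i) k) as [h2|h2];
  destruct (Nat.leb_spec i k) as [h3|h3]; try lia.
  -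
    set (d := (k - S i)%nat). assert (Hk : k = S (i + d)) by (unfold d; lia).
    clearbody d. subst k.
    replace (S (S (i + d)) - S i)%nat with (S d) by lia.
    replace (S (i + d) - S i)%nat with d by lia.
    replace (S (i + d) - i)%nat with (S d) by lia.
    simpl qpoch.
    assert (Qi := Q_nz q i Hq). assert (Qn := Q_nz q d Hq). assert (Qin := Q_nz q (i + d) Hq).
    assert (F1 := qfac_nz q i Hq). assert (F2 := qfac_nz q d Hq).
    assert (F4 := qfac_nz q (i+d) Hq).
    replace (q * (q * cpow q (i + d))) with ((q * cpow q d) * (q * cpow q i))
      by (rewrite cpow_add; ring).
    lazymatch goal with |- ?a = ?b => change (@eq C a b) end.
    simpl cpow. field. repeat split; auto.
  -
    assert (i = k) by lia. subst. rewrite Nat.sub_diag. replace (S k - S k)%nat with 0%nat by lia.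
    simpl. rewrite !Nat.sub_diag. simpl. field. split. apply Q_nz; auto. apply qfac_nz; auto.
  - ring.
Qed.

Definition cb (q : C) (k j : nat) (x : C) : C :=
  qb q k j * cpow (-1) j * cpowZ q (Tn j - Z.of_nat j) * cpow x j.

Lemma qbinom (q x : C) k : q <> 0 -> Cmod q < 1 ->
  qpoch x q k = sum_n (fun j => cb q k j x) k.
Proof.
  intros Hq0 Hq. induction k.
  - rewrite sum_O. unfold cb. rewrite qb_0 by auto. simpl. Cring.
  - simpl qpoch. rewrite IHk. rewrite sum_n_shift1.
    assert (E : forall i, (i <= k)%nat -> cb q (S k) (S i) x = cb q k (S i) x + (- (x * cpow q k)) * cb q k i x).
    { intros i Hi. unfold cb. rewrite qb_pascal by auto.
      assert (Ee : cpow q (k - i) * cpowZ q (Tn (S i) - Z.of_nat (S i)) = cpow q k * cpowZ q (Tn i - Z.of_nat i)).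
      { rewrite <- !cpowZ_nat, <- !cpowZ_add by auto. f_equal. rewrite Tn_S. lia. }
      simpl cpow at 3 6. 
      transitivity (qb q k (S i) * cpow (-1) (S i) * cpowZ q (Tn (S i) - Z.of_nat (S i)) * cpow x (S i)
        - (cpow q (k - i) * cpowZ q (Tn (S i) - Z.of_nat (S i))) * qb q k i * cpow (-1) i * cpow x (S i)).
      + simpl. ring.
      + rewrite Ee. simpl. ring. }
    rewrite (sum_n_extC _ (fun i => cb q k (S i) x + (- (x * cpow q k)) * cb q k i x) k E).
    rewrite sum_n_plusC, sum_n_scalC.
    assert (H0 : cb q (S k) 0 x = cb q k 0 x).
    { unfold cb. rewrite !qb_0 by auto. reflexivity. }
    rewrite H0.
    assert (Hl : sum_n (fun j => cb q k j x) (S k) = sum_n (fun j => cb q k j x) k).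
    { rewrite sum_n_C_S. unfold cb at 2. rewrite qb_big by lia. Cring. }
    rewrite sum_n_shift1 in Hl. rewrite <- Hl. Cring.
Qed.


Lemma Qshift (q : C) n k : qpoch q q (n + k) = qpoch q q n * qpoch (cpow q (S n)) q k.
Proof.
  induction k.
  - rewrite Nat.add_0_r. simpl. ring.
  - rewrite Nat.add_succ_r. simpl qpoch. rewrite IHk. rewrite cpow_add. simpl. ring.
Qed.

Lemma Tn_add a b : Tn (a + b) = (Tn a + Tn b + Z.of_nat a * Z.of_nat b)%Z.
Proof.
  assert (h1 := Tn_spec a). assert (h2 := Tn_spec b). assert (h3 := Tn_spec (a + b)).
  rewrite Nat2Z.inj_add in h3. nia.
Qed.

Lemma m1pow_sq j : cpow (-1) j * cpow (-1) j = 1.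
Proof. induction j. simpl. ring. simpl. replace (-1 * cpow (-1) j * (-1 * cpow (-1) j)) with (cpow (-1) j * cpow (-1) j) by ring. auto. Qed.

Definition Eexp (m : Z) (n j l : nat) : Z :=
  let n' := Z.of_nat n in let j' := Z.of_nat j in let l' := Z.of_nat l in
  (n' * n' + (m + 1) * n' + j' * j' + j' + Tn l + j' * l' - n' * l')%Z.

Definition uterm (m : Z) (q : C) (n j l : nat) : C :=
  cpow (-1) l * cpowZ q (Eexp m n j l) / (cpow (qpoch q q n) 2 * qpoch q q j * qpoch q q l).

Lemma fterm_split (m : Z) (q : C) n k : q <> 0 -> Cmod q < 1 ->
  fterm m q n k = sum_n (fun j => uterm m q n j (k - j)) k.
Proof.
  intros Hq0 Hq. unfold fterm. rewrite Qshift, (qbinom q (cpow q (S n)) k Hq0 Hq).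
  set (c := cpow (-1) k * cpowZ q (fexp m n k) * qpoch q q n / (cpow (qpoch q q n) 3 * qpoch q q k)).
  transitivity (c * sum_n (fun j => cb q k j (cpow q (S n))) k).
  { unfold c. field. split. apply Q_nz; auto. apply cpow_nz. apply Q_nz; auto. }
  rewrite <- sum_n_scalC. apply sum_n_extC. intros j Hj.
  unfold c, cb, uterm, qb. destruct (Nat.leb_spec j k) as [_|h]; [|lia].
  set (l := (k - j)%nat). assert (Hk : k = (j + l)%nat) by (unfold l; lia). clearbody l. subst k.
  replace (j + l - j)%nat with l by lia.
  rewrite <- (cpowZ_nat q (S n)), cpowZ_mul_nat by auto.
  rewrite (cpow_add (-1) j l).
  assert (Ee : cpowZ q (fexp m n (j + l)) * cpowZ q (Tn j - Z.of_nat j) * cpowZ q (Z.of_nat (S n) * Z.of_nat j)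
               = cpowZ q (Eexp m n j l)).
  { rewrite <- !cpowZ_add by auto. f_equal. unfold fexp, Eexp.
    change ((Z.of_nat (j + l) * (Z.of_nat (j + l) + 1)) / 2)%Z with (Tn (j + l)).
    rewrite Tn_add. assert (h := Tn_spec j). rewrite !Nat2Z.inj_add, Nat2Z.inj_succ. nia. }
  rewrite <- Ee.
  assert (S1 := m1pow_sq j).
  assert (Q1 := Q_nz q n Hq). assert (Q2 := Q_nz q j Hq). assert (Q3 := Q_nz q l Hq).
  assert (Q4 := Q_nz q (j + l) Hq).
  simpl cpow.
  transitivity ((cpow (-1) j * cpow (-1) j) * (cpow (-1) l * (cpowZ q (fexp m n (j + l)) * cpowZ q (Tn j - Z.of_nat j) * cpowZ q (Z.of_nat (S n) * Z.of_nat j)) /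
   (qpoch q q n * (qpoch q q n * 1) * qpoch q q j * qpoch q q l))).
  - field. repeat split; auto.
  - rewrite S1. ring.
Qed.


Lemma finite_series (a : nat -> C) N : (forall j, (N < j)%nat -> a j = 0) -> is_series a (sum_n a N).
Proof.
  intros H. apply seriesC. intro eps. exists N. intros n Hn.
  assert (E : sum_n a n = sum_n a N).
  { induction Hn. reflexivity. rewrite sum_n_C_S, IHHn, H by lia. Cring. }
  rewrite E. replace (sum_n a N - sum_n a N) with (RtoC 0) by Cring. rewrite Cmod_0. destruct eps; simpl; lra.
Qed.

Lemma shift_series (a : nat -> C) j L : (forall k, (k < j)%nat -> a k = 0) ->
  is_series (fun l => a (j + l)%nat) L -> is_series a L.
Proof.
  intros H HL. destruct j as [|j].
  - eapply is_series_ext; [|exact HL]. intro; reflexivity.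
  - apply (is_series_decr_n (K:=C_AbsRing) (V:=C_NormedModule) a (S j)). lia.
    assert (E : sum_n a j = RtoC 0).
    { clear HL. assert (forall i, (i <= j)%nat -> sum_n a i = RtoC 0).
      { induction i; intros Hi. rewrite sum_O. apply H; lia. rewrite sum_n_C_S, IHi, H by lia. Cring. }
      apply H0; lia. }
    simpl Init.Nat.pred.
    replace (@sum_n (NormedModule.AbelianMonoid C_AbsRing C_NormedModule) a j) with (RtoC 0)
      by (symmetry; exact E).
    enough (Heq : @plus (NormedModule.AbelianMonoid C_AbsRing C_NormedModule) L
       (@opp (NormedModule.AbelianGroup C_AbsRing C_NormedModule) (RtoC 0)) = L)
      by (rewrite Heq; exact HL).
    change (L + - 0 = L). Cring.
Qed.

Lemma Q_low (q : C) i : Cmod q < 1 -> (1 <= KL q * Cmod (qpoch q q i))%R.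
Proof.
  intros Hq. assert (h := Q_inv_bound q i Hq). rewrite Cmod_inv in h by (apply Q_nz; auto).
  assert (hp : 0 < Cmod (qpoch q q i)) by (apply Cmod_gt_0; apply Q_nz; auto).
  apply Rmult_le_compat_r with (r := Cmod (qpoch q q i)) in h; [|lra].
  rewrite Rinv_l in h by lra. lra.
Qed.

Lemma div4_bound (q a : C) n j l : Cmod q < 1 ->
  (Cmod (a / (cpow (qpoch q q n) 2 * qpoch q q j * qpoch q q l)) <= Cmod a * (KL q ^ 4))%R.
Proof.
  intros Hq. assert (h1 := Q_low q n Hq). assert (h2 := Q_low q j Hq). assert (h3 := Q_low q l Hq).
  assert (Hnz : cpow (qpoch q q n) 2 * qpoch q q j * qpoch q q l <> 0).
  { apply Cmult_neq_0. apply Cmult_neq_0. apply cpow_nz. all: apply Q_nz; auto. }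
  rewrite Cmod_div by auto. rewrite !Cmod_mult, Cmod_cpow.
  set (x := Cmod (qpoch q q n)) in *. set (y := Cmod (qpoch q q j)) in *. set (z := Cmod (qpoch q q l)) in *.
  set (K := KL q) in *.
  assert (0 <= Cmod a) by apply Cmod_ge_0.
  assert (0 < K) by apply KL_pos.
  assert (0 < x) by (unfold x; apply Cmod_gt_0; apply Q_nz; auto).
  assert (0 < y) by (unfold y; apply Cmod_gt_0; apply Q_nz; auto).
  assert (0 < z) by (unfold z; apply Cmod_gt_0; apply Q_nz; auto).
  assert (Hp : 1 <= (K * x) * (K * x) * (K * y) * (K * z)).
  { assert (1 <= (K*x)*(K*x)) by nra. assert (1 <= (K*x)*(K*x)*(K*y)) by nra. nra. }
  assert (0 < x ^ 2 * y * z) by (simpl; repeat apply Rmult_lt_0_compat; lra).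
  apply Rmult_le_reg_r with (x ^ 2 * y * z)%R; auto.
  unfold Rdiv. rewrite Rmult_assoc, Rinv_l by lra.
  replace (Cmod a * K ^ 4 * (x ^ 2 * y * z))%R with (Cmod a * ((K * x) * (K * x) * (K * y) * (K * z)))%R by ring.
  nra.
Qed.

Definition vterm (m : Z) (q : C) (n k j : nat) : C :=
  if (j <=? k)%nat then uterm m q n j (k - j) else 0.

Definition hexp (m : Z) (n j : nat) : Z :=
  (Z.of_nat n * Z.of_nat n + (m + 1) * Z.of_nat n + Z.of_nat j * Z.of_nat j + Z.of_nat j)%Z.

Definition hterm (m : Z) (q P : C) (n j : nat) : C :=
  if (j <? n)%nat then 0 else
  cpowZ q (hexp m n j) * P / (cpow (qpoch q q n) 2 * qpoch q q j * qpoch q q (j - n)).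

Lemma uterm_eterm (m : Z) (q : C) n j l : q <> 0 -> Cmod q < 1 ->
  uterm m q n j l = (cpowZ q (hexp m n j) / (cpow (qpoch q q n) 2 * qpoch q q j)) * eterm q (Z.of_nat j - Z.of_nat n) l.
Proof.
  intros Hq0 Hq. unfold uterm, eterm.
  replace (Eexp m n j l) with (hexp m n j + (Tn l + (Z.of_nat j - Z.of_nat n) * Z.of_nat l))%Z
    by (unfold Eexp, hexp; ring).
  rewrite cpowZ_add by auto.
  assert (Hn : forall i, qpoch q q i <> 0) by (intro; apply Q_nz; auto).
  field. repeat split; auto. apply cpow_nz; auto.
Qed.


Lemma Eexp_lb (m : Z) n j l :
  (Z.of_nat (j + l + j) - (2 * (Z.of_nat n + 1) * (Z.of_nat n + 1) - Z.of_nat n * Z.of_nat n - (m + 1) * Z.of_nat n)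
   <= Eexp m n j l)%Z.
Proof.
  unfold Eexp. assert (h := Tn_lin l (- Z.of_nat n)).
  assert (h2 : (Z.of_nat j <= Z.of_nat j * Z.of_nat j)%Z) by nia.
  assert (h3 : (0 <= Z.of_nat j * Z.of_nat l)%Z) by nia.
  rewrite !Nat2Z.inj_add. nia.
Qed.

Lemma inner (m : Z) (q P : C) n : q <> 0 -> Cmod q < 1 -> is_qpoch_inf q P ->
  exists S, is_series (fterm m q n) S /\ is_series (hterm m q P n) S.
Proof.
  intros Hq0 Hq HP.
  set (D := (2 * (Z.of_nat n + 1) * (Z.of_nat n + 1) - Z.of_nat n * Z.of_nat n - (m + 1) * Z.of_nat n)%Z).
  set (r := Cmod q).
  assert (Hr : 0 < r <= 1) by (split; [apply Cmod_gt_0; auto | unfold r; lra]).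
  apply (fubini (vterm m q n) (fterm m q n) (hterm m q P n) (KL q ^ 4 * powerRZ r (- D)) r).
  - unfold r; split; [apply Cmod_ge_0|lra].
  - intros k j. unfold vterm. destruct (Nat.leb_spec j k) as [h|h].
    + unfold uterm. eapply Rle_trans. apply div4_bound; auto.
      rewrite Cmod_mult, Cmod_m1pow, Cmod_cpowZ by auto. fold r.
      set (l := (k - j)%nat). assert (Hk : k = (j + l)%nat) by (unfold l; lia). clearbody l. subst k.
      assert (Hb : (powerRZ r (Eexp m n j l) <= powerRZ r (- D) * r ^ (j + l + j))%R).
      { apply powerRZ_lin_bound; auto. apply Eexp_lb. }
      rewrite pow_add in Hb.
      assert (0 < KL q ^ 4)%R by (apply pow_lt; apply KL_pos).
      nra.
    + rewrite Cmod_0. assert (0 < KL q ^ 4)%R by (apply pow_lt; apply KL_pos).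
      assert (0 < powerRZ r (- D))%R by (apply powerRZ_lt; lra).
      assert (0 <= r ^ k)%R by (apply pow_le; lra). assert (0 <= r ^ j)%R by (apply pow_le; lra).
      apply Rmult_le_pos; [apply Rmult_le_pos|]; try lra. apply Rmult_le_pos; lra.
  - intro k. assert (E : fterm m q n k = sum_n (vterm m q n k) k).
    { rewrite fterm_split by auto. apply sum_n_extC. intros j Hj. unfold vterm.
      destruct (Nat.leb_spec j k); [reflexivity|lia]. }
    rewrite E. apply finite_series. intros j Hj. unfold vterm. destruct (Nat.leb_spec j k); [lia|reflexivity].
  - intro j. apply (shift_series _ j).
    { intros k Hk. unfold vterm. destruct (Nat.leb_spec j k); [lia|reflexivity]. }
    assert (He := euler q P (Z.of_nat j - Z.of_nat n) Hq0 Hq HP).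
    set (coef := cpowZ q (hexp m n j) / (cpow (qpoch q q n) 2 * qpoch q q j)).
    apply (is_series_scal (K:=C_AbsRing) (V:=C_NormedModule) coef) in He.
    eapply is_series_ext with (a := fun l => scal coef (eterm q (Z.of_nat j - Z.of_nat n) l)).
    { intro l. unfold vterm. destruct (Nat.leb_spec j (j + l)) as [_|h]; [|lia].
      replace (j + l - j)%nat with l by lia. rewrite uterm_eterm by auto. reflexivity. }
    replace (hterm m q P n j) with (scal coef (if (Z.of_nat j - Z.of_nat n <? 0)%Z then RtoC 0
       else P / qpoch q q (Z.to_nat (Z.of_nat j - Z.of_nat n)))); auto.
    unfold hterm, coef. destruct (Nat.ltb_spec j n) as [h|h].
    + destruct (Z.ltb_spec (Z.of_nat j - Z.of_nat n) 0); [|lia]. change (coef * 0 = 0). Cring.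
    + destruct (Z.ltb_spec (Z.of_nat j - Z.of_nat n) 0); [lia|].
      replace (Z.to_nat (Z.of_nat j - Z.of_nat n)) with (j - n)%nat by lia.
      change ((cpowZ q (hexp m n j) / (cpow (qpoch q q n) 2 * qpoch q q j)) * (P / qpoch q q (j - n)) =
              cpowZ q (hexp m n j) * P / (cpow (qpoch q q n) 2 * qpoch q q j * qpoch q q (j - n))).
      field. repeat split; try apply Q_nz; auto. apply cpow_nz. apply Q_nz; auto.
Qed.


Lemma Cmult_eq_reg_l (c a b : C) : c <> 0 -> c * a = c * b -> a = b.
Proof. intros Hc H. replace a with (/ c * (c * a)) by (field; auto). rewrite H. field; auto. Qed.

Lemma cpowZ_opp (q : C) z : q <> 0 -> cpowZ q (- z) = / cpowZ q z.
Proof.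
  intros Hq. apply (Cmult_eq_reg_l (cpowZ q z)). apply cpowZ_nz; auto.
  rewrite <- cpowZ_add by auto. rewrite Z.add_opp_diag_r. simpl. field. apply cpowZ_nz; auto.
Qed.

Lemma sum_split_last (f g : nat -> C) (F : nat -> C) j :
  (forall n, (n <= S j)%nat -> F n = (if (n <=? j)%nat then f n else 0) + (match n with O => 0 | S p => g p end)) ->
  sum_n F (S j) = sum_n f j + sum_n g j.
Proof.
  intros H. rewrite (sum_n_extC F _ (S j) H). rewrite sum_n_plusC.
  rewrite sum_n_C_S. destruct (Nat.leb_spec (S j) j); [lia|].
  rewrite sum_n_shift1.
  assert (E1 : sum_n (fun n => if (n <=? j)%nat then f n else RtoC 0) j = sum_n f j).
  { apply sum_n_extC. intros n Hn. destruct (Nat.leb_spec n j); [reflexivity|lia]. }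
  replace (sum_n f j + sum_n g j) with (sum_n f j + RtoC 0 + (RtoC 0 + sum_n g j)) by Cring.
  f_equal. f_equal. exact E1.
Qed.

Definition Hterm (q : C) (t j n : nat) : C :=
  cpowZ q (Z.of_nat n * Z.of_nat n + Z.of_nat t * Z.of_nat n) /
  (qpoch q q n * qpoch q q (t + n) * qpoch q q (j - n)).

Lemma Hrec (q : C) t j : q <> 0 -> Cmod q < 1 ->
  (1 - cpow q (S j)) * sum_n (Hterm q t (S j)) (S j) =
  sum_n (Hterm q t j) j + cpow q (t + S j) * sum_n (Hterm q (S t) j) j.
Proof.
  intros Hq0 Hq. rewrite <- !sum_n_scalC.
  apply sum_split_last. intros n Hn.
  assert (QN := fun i => Q_nz q i Hq). assert (FN := fun i => qfac_nz q i Hq).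
  destruct (Nat.leb_spec n j) as [h|h].
  - destruct n as [|p].
    + unfold Hterm. simpl. rewrite Nat.add_0_r, Nat.sub_0_r.
      field. repeat split; auto.
    + set (d := (j - S p)%nat). assert (Hj : j = (S p + d)%nat) by (unfold d; lia). clearbody d. subst j.
      unfold Hterm.
      replace (S (S p + d) - S p)%nat with (S d) by lia.
      replace (S p + d - S p)%nat with d by lia.
      replace (S p + d - p)%nat with (S d) by lia.
      replace (S t + p)%nat with (t + S p)%nat by lia.
      replace (Z.of_nat p * Z.of_nat p + Z.of_nat (S t) * Z.of_nat p)%Z with
        ((Z.of_nat (S p) * Z.of_nat (S p) + Z.of_nat t * Z.of_nat (S p)) + Z.of_nat (S d) + - Z.of_nat (t + S (S p + d)))%Z by lia.
      rewrite !cpowZ_add, cpowZ_opp, !cpowZ_nat by auto.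
      assert (Cnz := cpow_nz q (t + S (S p + d)) Hq0).
      replace (cpow q (S (S p + d))) with (cpow q (S d) * cpow q (S p)) by (rewrite <- cpow_add; f_equal; lia).
      simpl qpoch. simpl cpow.
      field. repeat split; auto.
  - assert (n = S j) by lia. subst n. unfold Hterm.
    rewrite Nat.sub_diag. replace (S t + j)%nat with (t + S j)%nat by lia.
    replace (Z.of_nat j * Z.of_nat j + Z.of_nat (S t) * Z.of_nat j)%Z
      with ((Z.of_nat (S j) * Z.of_nat (S j) + Z.of_nat t * Z.of_nat (S j)) + - Z.of_nat (t + S j))%Z by lia.
    rewrite !cpowZ_add, cpowZ_opp, !cpowZ_nat by auto.
    assert (Cnz := cpow_nz q (t + S j) Hq0).
    replace (j - j)%nat with 0%nat by lia.
    simpl qpoch. change (cpow q (S j)) with (q * cpow q j). field. repeat split; auto.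
Qed.

Lemma Hsum (q : C) j : q <> 0 -> Cmod q < 1 -> forall t,
  sum_n (Hterm q t j) j = / (qpoch q q j * qpoch q q (t + j)).
Proof.
  intros Hq0 Hq. assert (QN := fun i => Q_nz q i Hq). assert (FN := fun i => qfac_nz q i Hq).
  induction j; intro t.
  - rewrite sum_O. unfold Hterm. replace (Z.of_nat 0 * Z.of_nat 0 + Z.of_nat t * Z.of_nat 0)%Z with 0%Z by lia. simpl. rewrite Nat.add_0_r. field. auto.
  - assert (R := Hrec q t j Hq0 Hq). rewrite IHj, IHj in R.
    assert (Hf : 1 - cpow q (S j) <> 0) by apply FN.
    apply (Cmult_eq_reg_l (1 - cpow q (S j))); auto. rewrite R.
    replace (t + S j)%nat with (S (t + j)) by lia. replace (S t + j)%nat with (S (t + j)) by lia.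
    replace (cpow q (S (t + j))) with (q * cpow q (t + j)) by reflexivity.
    simpl qpoch. simpl cpow. field. repeat split; auto.
Qed.


Definition Bterm (q : C) (a : Z) (j n : nat) : C :=
  cpowZ q (Z.of_nat n * Z.of_nat n + a * Z.of_nat n) / (cpow (qpoch q q n) 2 * qpoch q q (j - n)).

Definition Bsum (q : C) (a : Z) (j : nat) : C := sum_n (Bterm q a j) j.

Lemma B0 (q : C) j : q <> 0 -> Cmod q < 1 -> Bsum q 0 j = / (qpoch q q j * qpoch q q j).
Proof.
  intros Hq0 Hq. unfold Bsum. transitivity (sum_n (Hterm q 0 j) j).
  2: { rewrite (Hsum q j Hq0 Hq 0). reflexivity. }
  apply sum_n_extC. intros n Hn.
  unfold Bterm, Hterm. replace (0 + n)%nat with n by lia.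
  replace (Z.of_nat n * Z.of_nat n + 0 * Z.of_nat n)%Z with (Z.of_nat n * Z.of_nat n + Z.of_nat 0 * Z.of_nat n)%Z by lia.
  replace (cpow (qpoch q q n) 2) with (qpoch q q n * qpoch q q n) by (simpl; ring). reflexivity.
Qed.

Lemma Bstep (q : C) a j : q <> 0 -> Cmod q < 1 ->
  Bsum q a (S j) = Bsum q a j + cpow q (S j) * Bsum q (a - 1) (S j).
Proof.
  intros Hq0 Hq. unfold Bsum. rewrite <- sum_n_scalC.
  assert (QN := fun i => Q_nz q i Hq). assert (FN := fun i => qfac_nz q i Hq).
  transitivity (sum_n (fun n => (if (n <=? j)%nat then Bterm q a j n else 0) + cpow q (S j) * Bterm q (a - 1) (S j) n) (S j)).
  - apply sum_n_extC. intros n Hn. destruct (Nat.leb_spec n j) as [h|h].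
    + set (d := (j - n)%nat). assert (Hj : j = (n + d)%nat) by (unfold d; lia). clearbody d. subst j.
      unfold Bterm. replace (S (n + d) - n)%nat with (S d) by lia. replace (n + d - n)%nat with d by lia.
      replace (Z.of_nat n * Z.of_nat n + (a - 1) * Z.of_nat n)%Z with
        ((Z.of_nat n * Z.of_nat n + a * Z.of_nat n) + Z.of_nat (S d) + - Z.of_nat (S (n + d)))%Z by lia.
      rewrite !cpowZ_add, cpowZ_opp, !cpowZ_nat by auto.
      assert (Cnz := cpow_nz q (S (n + d)) Hq0).
      assert (Cnz2 : cpowZ q (Z.of_nat n * Z.of_nat n) <> 0) by (apply cpowZ_nz; auto).
      simpl qpoch. change (cpow q (S d)) with (q * cpow q d).
      field. repeat split; auto. apply cpow_nz; auto.
    + assert (n = S j) by lia. subst n. unfold Bterm. rewrite Nat.sub_diag.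
      replace (Z.of_nat (S j) * Z.of_nat (S j) + (a - 1) * Z.of_nat (S j))%Z with
        ((Z.of_nat (S j) * Z.of_nat (S j) + a * Z.of_nat (S j)) + - Z.of_nat (S j))%Z by lia.
      rewrite !cpowZ_add, cpowZ_opp, !cpowZ_nat by auto.
      assert (Cnz := cpow_nz q (S j) Hq0).
      simpl qpoch. field. repeat split; auto. all: try (apply cpow_nz; auto). apply Cmult_neq_0; auto.
  - etransitivity. apply sum_n_plusC. f_equal.
    rewrite sum_n_C_S. destruct (Nat.leb_spec (S j) j); [lia|].
    transitivity (sum_n (Bterm q a j) j + RtoC 0); [|Cring]. f_equal.
    apply sum_n_extC. intros n Hn. destruct (Nat.leb_spec n j); [reflexivity|lia].
Qed.

Lemma B1 (q : C) j : q <> 0 -> Cmod q < 1 ->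
  Bsum q (-1) j = (2 - cpow q j) / (qpoch q q j * qpoch q q j).
Proof.
  intros Hq0 Hq. assert (QN := fun i => Q_nz q i Hq). assert (FN := fun i => qfac_nz q i Hq).
  destruct j as [|j].
  - unfold Bsum, Bterm. rewrite sum_O. simpl. field.
  - assert (S1 := Bstep q 0 j Hq0 Hq). replace (0 - 1)%Z with (-1)%Z in S1 by reflexivity.
    rewrite !B0 in S1 by auto.
    assert (Cnz := cpow_nz q (S j) Hq0).
    apply (Cmult_eq_reg_l (cpow q (S j))); auto.
    transitivity (/ (qpoch q q (S j) * qpoch q q (S j)) - / (qpoch q q j * qpoch q q j)).
    + rewrite S1. Cring.
    + simpl qpoch. simpl cpow. simpl cpow in Cnz. field. repeat split; auto.
Qed.

Lemma B2 (q : C) j : q <> 0 -> Cmod q < 1 ->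
  Bsum q (-2) j = ((3 + / q) - (2 + 2 * / q) * cpow q j + cpowZ q (2 * Z.of_nat j - 1))
                  / (qpoch q q j * qpoch q q j).
Proof.
  intros Hq0 Hq. assert (QN := fun i => Q_nz q i Hq). assert (FN := fun i => qfac_nz q i Hq).
  destruct j as [|j].
  - unfold Bsum, Bterm. rewrite sum_O. simpl. field. auto.
  - assert (S1 := Bstep q (-1) j Hq0 Hq). replace (-1 - 1)%Z with (-2)%Z in S1 by reflexivity.
    rewrite !B1 in S1 by auto.
    assert (Cnz := cpow_nz q (S j) Hq0).
    apply (Cmult_eq_reg_l (cpow q (S j))); auto.
    replace (2 * Z.of_nat (S j) - 1)%Z with (Z.of_nat (S (j + j))) by lia. rewrite cpowZ_nat.
    transitivity ((2 - cpow q (S j)) / (qpoch q q (S j) * qpoch q q (S j)) - (2 - cpow q j) / (qpoch q q j * qpoch q q j)).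
    + rewrite S1. Cring.
    + simpl qpoch. simpl cpow. rewrite (cpow_add q j j). simpl cpow in Cnz. field. repeat split; auto.
Qed.


Lemma mul_div_cancel (P x : C) : P <> 0 -> P * (x / P) = x.
Proof. intros H. field. auto. Qed.

Lemma P_nz (q P : C) : Cmod q < 1 -> is_qpoch_inf q P -> P <> 0.
Proof.
  intros Hq HP HP0. subst P.
  assert (he : 0 < / (2 * KL q)) by (apply Rinv_0_lt_compat; assert (h := KL_pos q); lra).
  destruct (proj1 (limC _ 0) HP (mkposreal _ he)) as [N HN]. simpl in HN.
  specialize (HN N (le_n _)). replace (qpoch q q N - 0) with (qpoch q q N) in HN by ring.
  assert (h := Q_low q N Hq). assert (hk := KL_pos q).
  assert (KL q * Cmod (qpoch q q N) < KL q * / (2 * KL q))%R by (apply Rmult_lt_compat_l; auto).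
  replace (KL q * / (2 * KL q))%R with (/ 2)%R in H by (field; lra). lra.
Qed.

Lemma hsum (m : Z) (q P : C) j : q <> 0 -> Cmod q < 1 ->
  sum_n (fun n => hterm m q P n j) j = P * (cpowZ q (Z.of_nat j * Z.of_nat j + Z.of_nat j) / qpoch q q j) * Bsum q (m + 1) j.
Proof.
  intros Hq0 Hq. unfold Bsum. rewrite <- sum_n_scalC. apply sum_n_extC. intros n Hn.
  unfold hterm, Bterm. destruct (Nat.ltb_spec j n) as [h|h]; [lia|].
  unfold hexp. replace (Z.of_nat n * Z.of_nat n + (m + 1) * Z.of_nat n + Z.of_nat j * Z.of_nat j + Z.of_nat j)%Z
    with ((Z.of_nat j * Z.of_nat j + Z.of_nat j) + (Z.of_nat n * Z.of_nat n + (m + 1) * Z.of_nat n))%Z by lia.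
  rewrite (cpowZ_add q (Z.of_nat j * Z.of_nat j + Z.of_nat j)) by auto.
  assert (QN := fun i => Q_nz q i Hq).
  field. repeat split; auto. apply cpow_nz; auto.
Qed.

Lemma outer (m : Z) (q P : C) (c : nat -> C) : q <> 0 -> Cmod q < 1 -> is_qpoch_inf q P ->
  (forall j, Bsum q (m + 1) j = c j / (qpoch q q j * qpoch q q j)) ->
  exists S, is_series (fun j => c j * bterm q j) S /\ is_f m q (P * S).
Proof.
  intros Hq0 Hq HP HB.
  assert (Hin : forall n, exists S, is_series (fterm m q n) S /\ is_series (hterm m q P n) S)
    by (intro n; apply inner; auto).
  set (g := fun n => proj1_sig (constructive_indefinite_description _ (Hin n))).
  assert (Hg : forall n, is_series (fterm m q n) (g n) /\ is_series (hterm m q P n) (g n)).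
  { intro n. unfold g. destruct (constructive_indefinite_description _ (Hin n)) as [x Hx]. exact Hx. }
  set (r := Cmod q).
  assert (Hr : 0 < r <= 1) by (split; [apply Cmod_gt_0; auto | unfold r; lra]).
  destruct (fubini (fun n j => hterm m q P n j) g (fun j => sum_n (fun n => hterm m q P n j) j)
              (Cmod P * KL q ^ 4 * powerRZ r (- (m * m))) r) as [S0 [HS1 HS2]].
  - unfold r; split; [apply Cmod_ge_0|lra].
  - intros n j. unfold hterm. destruct (Nat.ltb_spec j n) as [h|h].
    + rewrite Cmod_0. assert (0 < KL q ^ 4)%R by (apply pow_lt; apply KL_pos).
      assert (0 < powerRZ r (- (m * m)))%R by (apply powerRZ_lt; lra).
      assert (0 <= r ^ n)%R by (apply pow_le; lra). assert (0 <= r ^ j)%R by (apply pow_le; lra).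
      assert (0 <= Cmod P) by apply Cmod_ge_0.
      apply Rmult_le_pos; [apply Rmult_le_pos; [apply Rmult_le_pos; [apply Rmult_le_pos|]|]|]; lra.
    + eapply Rle_trans. apply div4_bound; auto.
      rewrite Cmod_mult, Cmod_cpowZ by auto. fold r.
      assert (Hb : (powerRZ r (hexp m n j) <= powerRZ r (- (m * m)) * r ^ (n + j))%R).
      { apply powerRZ_lin_bound; auto. unfold hexp. rewrite Nat2Z.inj_add.
        assert (h1 := Z.square_nonneg (2 * Z.of_nat n + m)). assert (h2 := Z.square_nonneg m). assert (h3 := Z.square_nonneg (Z.of_nat j)). nia. }
      rewrite pow_add in Hb.
      assert (0 < KL q ^ 4)%R by (apply pow_lt; apply KL_pos).
      assert (0 <= Cmod P) by apply Cmod_ge_0.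
      assert (0 <= powerRZ r (hexp m n j))%R by (apply powerRZ_le; lra).
      replace (Cmod P * KL q ^ 4 * powerRZ r (- (m * m)) * r ^ n * r ^ j)%R
        with (Cmod P * KL q ^ 4 * (powerRZ r (- (m * m)) * (r ^ n * r ^ j)))%R by ring.
      replace (powerRZ r (hexp m n j) * Cmod P * KL q ^ 4)%R with (Cmod P * KL q ^ 4 * powerRZ r (hexp m n j))%R by ring.
      apply Rmult_le_compat_l; auto. apply Rmult_le_pos; lra.
  - intro n. apply Hg.
  - intro j. apply finite_series. intros n Hn. unfold hterm. destruct (Nat.ltb_spec j n); [reflexivity|lia].
  - assert (HPnz := P_nz q P Hq HP).
    exists (S0 / P). split.
    + apply (is_series_scal (K:=C_AbsRing) (V:=C_NormedModule) (/ P)) in HS2.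
      assert (E : @scal C_AbsRing C_NormedModule (/ P) S0 = S0 / P) by (change (/ P * S0 = S0 / P); field; auto).
      rewrite <- E. eapply is_series_ext; [|exact HS2].
      intro j. change (/ P * sum_n (fun n => hterm m q P n j) j = c j * bterm q j).
      rewrite hsum, HB by auto. unfold bterm.
      replace (Z.of_nat j * Z.of_nat j + Z.of_nat j)%Z with (Z.of_nat (j * (j + 1))) by lia.
      rewrite cpowZ_nat. assert (QN := Q_nz q j Hq).
      change (cpow (qpoch q q j) 3) with (qpoch q q j * (qpoch q q j * (qpoch q q j * 1))). field. repeat split; auto.
    + exists g. split. intro n; apply Hg.
      rewrite (mul_div_cancel P S0 HPnz). exact HS1.
Qed.


Lemma qpoch00 n : qpoch 0 0 n = 1.
Proof. induction n; simpl. reflexivity. rewrite IHn. ring. Qed.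

Lemma cpow0S n : cpow 0 (S n) = 0.
Proof. simpl. ring. Qed.

Lemma cpowZ0_pos z : (0 < z)%Z -> cpowZ 0 z = 0.
Proof.
  intros H. destruct z; try lia. simpl. destruct (Pos2Nat.is_succ p) as [k Hk]. rewrite Hk. apply cpow0S.
Qed.

Lemma fterm0 m n k : fterm m 0 n k = cpow (-1) k * cpowZ 0 (fexp m n k).
Proof. unfold fterm. rewrite !qpoch00. simpl. field. Qed.

Lemma fexp_T m n k : fexp m n k = (Z.of_nat n * (Z.of_nat n + 1) + Tn k - Z.of_nat n * Z.of_nat k + m * Z.of_nat n)%Z.
Proof. reflexivity. Qed.

Lemma q0_inf : is_qpoch_inf 0 1.
Proof.
  unfold is_qpoch_inf. apply limC. intro eps. exists 0%nat. intros n _.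
  rewrite qpoch00. replace (1 - 1) with (RtoC 0) by ring. rewrite Cmod_0. destruct eps; simpl; lra.
Qed.

Lemma q0_f m : (m = -1 \/ m = -2)%Z -> is_f m 0 (1 * 1).
Proof.
  intros Hm.
  assert (Hpos : forall n k, (2 <= k)%nat \/ (2 <= n)%nat -> (0 < fexp m n k)%Z).
  { intros n k H. rewrite fexp_T. assert (h := Tn_spec k).
    assert (h1 := Z.square_nonneg (Z.of_nat n - Z.of_nat k)).
    assert (h2 := Z.square_nonneg (Z.of_nat n - 1)).
    assert (h3 : (2 <= Z.of_nat k \/ 2 <= Z.of_nat n)%Z) by lia.
    assert (h4 : (0 <= Z.of_nat k)%Z) by lia. assert (h5 : (0 <= Z.of_nat n)%Z) by lia.
    destruct Hm; subst m; destruct h3; nia. }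
  exists (fun n => sum_n (fterm m 0 n) 1). split.
  - intro n. apply finite_series. intros k Hk. rewrite fterm0, cpowZ0_pos. ring. apply Hpos. lia.
  - replace (1 * 1) with (sum_n (fun n => sum_n (fterm m 0 n) 1) 1).
    + apply finite_series. intros n Hn. rewrite sum_n_C_S, sum_O, !fterm0, !cpowZ0_pos by (apply Hpos; lia). Cring.
    + rewrite sum_n_C_S, sum_O, !sum_n_C_S, !sum_O, !fterm0.
      destruct Hm; subst m.
      * replace (fexp (-1) 0 0) with 0%Z by reflexivity. replace (fexp (-1) 0 1) with 1%Z by reflexivity.
        replace (fexp (-1) 1 0) with 1%Z by reflexivity. replace (fexp (-1) 1 1) with 1%Z by reflexivity.
        rewrite !(cpowZ0_pos 1) by lia. simpl cpowZ. simpl cpow. Cring.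
      * replace (fexp (-2) 0 0) with 0%Z by reflexivity. replace (fexp (-2) 0 1) with 1%Z by reflexivity.
        replace (fexp (-2) 1 0) with 0%Z by reflexivity. replace (fexp (-2) 1 1) with 0%Z by reflexivity.
        rewrite !(cpowZ0_pos 1) by lia. simpl cpowZ. simpl cpow. Cring.
Qed.

Lemma bterm0 n : (0 < n)%nat -> bterm 0 n = 0.
Proof.
  intros H. unfold bterm. destruct n; [lia|]. simpl (S n * (S n + 1))%nat. rewrite cpow0S. unfold Cdiv. apply Cmult_0_l.
Qed.

Theorem mainTheorem8 (q : C) (hq : Cmod q < 1) :
  (exists P S : C, is_qpoch_inf q P /\
     is_series (fun n => bterm q n) S /\
     is_f (-1)%Z q (P * S))
  /\
  (exists P S : C, is_qpoch_inf q P /\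
     is_series (fun n => (2 - cpow q n) * bterm q n) S /\
     is_f (-2)%Z q (P * S))
  /\
  (q <> 0 ->
   exists P S : C, is_qpoch_inf q P /\
     is_series (fun n =>
        ((3 + / q) - (2 + 2 * / q) * cpow q n + cpowZ q (2 * Z.of_nat n - 1))
        * bterm q n) S /\
     is_f (-3)%Z q (P * S)).
Proof.
  destruct (Q_conv q hq) as [P HP].
  assert (Part3 : q <> 0 ->
   exists P S : C, is_qpoch_inf q P /\
     is_series (fun n =>
        ((3 + / q) - (2 + 2 * / q) * cpow q n + cpowZ q (2 * Z.of_nat n - 1))
        * bterm q n) S /\
     is_f (-3)%Z q (P * S)).
  { intros Hq0. destruct (outer (-3) q P (fun j => (3 + / q) - (2 + 2 * / q) * cpow q j + cpowZ q (2 * Z.of_nat j - 1)) Hq0 hq HP)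
      as [S [H1 H2]].
    { intro j. change (-3 + 1)%Z with (-2)%Z. apply B2; auto. }
    exists P, S. auto. }
  destruct (Ceq_dec q 0) as [Hq0|Hq0].
  - subst q. split; [|split].
    + exists 1, 1. split. apply q0_inf. split.
      * replace (RtoC 1) with (sum_n (fun n => bterm 0 n) 0).
        apply finite_series. intros; apply bterm0; lia.
        rewrite sum_O. unfold bterm. simpl. field.
      * apply q0_f. auto.
    + exists 1, 1. split. apply q0_inf. split.
      * replace (RtoC 1) with (sum_n (fun n => (2 - cpow 0 n) * bterm 0 n) 0).
        apply finite_series. intros; rewrite bterm0 by lia; ring.
        rewrite sum_O. unfold bterm. simpl. field.
      * apply q0_f. auto.
    + exact Part3.
  - split; [|split].
    + destruct (outer (-1) q P (fun _ => 1) Hq0 hq HP) as [S [H1 H2]].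
      { intro j. change (-1 + 1)%Z with 0%Z. rewrite B0 by auto. field.
        apply Q_nz; auto. }
      exists P, S. split; [exact HP|split; [|exact H2]].
      eapply is_series_ext; [|exact H1]. intro n; simpl. ring.
    + destruct (outer (-2) q P (fun j => 2 - cpow q j) Hq0 hq HP) as [S [H1 H2]].
      { intro j. change (-2 + 1)%Z with (-1)%Z. apply B1; auto. }
      exists P, S. auto.
    + exact Part3.
Qed.
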